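(* The residue hyperfield $Fv$ of a Krasner valued hyperfield $(F,v)$ is a field, i.e. its hyperaddition takes only singleton values.
   Context: A hyperfield is $(F,+,\cdot,0,1)$ with $+$ a multivalued operation making $(F,+,0)$ a canonical hypergroup (associative, commutative, unique inverses $-x$ with $0\in x+(-x)$, and $z\in x+y\Rightarrow y\in z+(-x)$; write $x-y:=x+(-y)$, $A+B:=\bigcup_{a\in A,b\in B}a+b$), $(F,\cdot)$ commutative with $0$ absorbing, $x(y+z)=xy+xz$, and $F\setminus\{0\}$ an abelian group with neutral $1\neq0$. Valuation on $F$: for an ordered abelian group $\Gamma$ and $\infty>\Gamma$ with $\gamma+\infty=\infty+\gamma=\infty$, a surjective map $v:F\to\Gamma\cup\{\infty\}$ with $vx=\infty\iff x=0$, $v(xy)=vx+vy$, $z\in x+y\Rightarrow vz\ge\min\{vx,vy\}$; $vF:=v(F\setminus\{0\})$; $\mathcal{O}_v:=\{x:vx\ge0\}$, $\mathcal{M}_v:=\{x:vx>0\}$. Residue hyperfield: $Fv:=\{x+\mathcal{M}_v: x\in\mathcal{O}_v\}$ where $x+\mathcal{M}_v:=\bigcup_{m\in\mathcal{M}_v}(x+m)$, with hyperaddition $(x+\mathcal{M}_v)\oplus(y+\mathcal{M}_v):=\{z+\mathcal{M}_v:z\in x+y\}$ and multiplication $(x+\mathcal{M}_v)(y+\mathcal{M}_v):=xy+\mathcal{M}_v$; it is a hyperfield. An initial segment of $\Gamma$ is $\rho\subseteq\Gamma$ with $\delta\in\rho,\gamma<\delta\Rightarrow\gamma\in\rho$;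 $\rho+\gamma:=\{\delta+\gamma:\delta\in\rho\}$; ''$\alpha>\rho+\gamma$'' means $\alpha\notin\rho+\gamma$. Krasner valued hyperfield: a valued hyperfield $(F,v)$ such that (KVH1) for all $x,y\in F$ with $0\notin x+y$, $v(x+y)$ is a singleton; (KVH2) there is an initial segment $\rho_v$ of $vF$ with $0\in\rho_v$ (the norm) such that for all $x,y,z,t\in F$ with $z\in x+y$: $t\in x+y$ iff $vs>\rho_v+\min\{vx,vy\}$ for all $s\in z-t$. *)

(* Defs.v *)
Set Implicit Arguments.
Unset Strict Implicit.

Record OAGroup := {
  og :> Type;
  gadd : og -> og -> og;
  gzero : og;
  gopp : og -> og;
  gle : og -> og -> Prop;
  gaddA : forall a b c, gadd a (gadd b c) = gadd (gadd a b) c;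
  gaddC : forall a b, gadd a b = gadd b a;
  gadd0 : forall a, gadd a gzero = a;
  gaddN : forall a, gadd a (gopp a) = gzero;
  gle_refl : forall a, gle a a;
  gle_anti : forall a b, gle a b -> gle b a -> a = b;
  gle_trans : forall a b c, gle a b -> gle b c -> gle a c;
  gle_total : forall a b, gle a b \/ gle b a;
  gle_add : forall a b c, gle a b -> gle (gadd a c) (gadd b c)
}.

Definition glt (G : OAGroup) (a b : G) : Prop := gle a b /\ a <> b.

(** Gamma u {oo}, with [None] = oo. *)
Definition eadd (G : OAGroup) (a b : option G) : option G :=
  match a, b with Some a, Some b => Some (gadd a b) | _, _ => None end.

Definition ele (G : OAGroup) (a b : option G) : Prop :=
  match a, b with
  | _, None => True
  | None, Some _ => False
  | Some a, Some b => gle a b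
  end.

Definition is_emin (G : OAGroup) (a b m : option G) : Prop :=
  (ele a b /\ m = a) \/ (ele b a /\ m = b).

(** * Hyperfields.  [hadd x y z] means z \in x + y. *)
Record Hyperfield := {
  hf :> Type;
  hadd : hf -> hf -> hf -> Prop;
  hzero : hf;
  hone : hf;
  hneg : hf -> hf;
  hmul : hf -> hf -> hf;
  hadd_nonempty : forall x y, exists z, hadd x y z;
  haddA : forall x y z w,
      (exists a, hadd x y a /\ hadd a z w) <-> (exists b, hadd y z b /\ hadd x b w);
  haddC : forall x y w, hadd x y w <-> hadd y x w;
  hadd0 : forall x w, hadd x hzero w <-> w = x;
  haddN : forall x, hadd x (hneg x) hzero;
  hneg_uniq : forall x y, hadd x y hzero -> y = hneg x;
  hadd_rev : forall x y z, hadd x y z -> hadd z (hneg x) y;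
  hmulC : forall x y, hmul x y = hmul y x;
  hmulA : forall x y z, hmul x (hmul y z) = hmul (hmul x y) z;
  hmul1 : forall x, hmul hone x = x;
  hmul0 : forall x, hmul hzero x = hzero;
  hmulDr : forall x y z w,
      (exists a, hadd y z a /\ w = hmul x a) <-> hadd (hmul x y) (hmul x z) w;
  hone_neq0 : hone <> hzero;
  hmul_neq0 : forall x y, x <> hzero -> y <> hzero -> hmul x y <> hzero;
  hinv_ex : forall x, x <> hzero -> exists y, hmul x y = hone
}.

Definition hsub (F : Hyperfield) (x y z : F) : Prop := hadd x (hneg y) z.

Definition is_valuation (F : Hyperfield) (G : OAGroup) (v : F -> option G) : Prop :=
  (forall g : option G, exists x, v x = g) /\
  (forall x, v x = None <-> x = (hzero F)) /\
  (forall x y, v (hmul x y) = eadd (v x) (v y)) /\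
  (forall x y z, hadd x y z -> forall m, is_emin (v x) (v y) m -> ele m (v z)).

Definition value_set (F : Hyperfield) (G : OAGroup) (v : F -> option G) (g : G) : Prop :=
  exists x, x <> (hzero F) /\ v x = Some g.

Definition is_initial_segment (G : OAGroup) (S rho : G -> Prop) : Prop :=
  (forall g, rho g -> S g) /\
  (forall d g, rho d -> S g -> glt g d -> rho g).

(** [above rho m a] : "a > rho + m", i.e. a \notin rho + m, for a, m in Gamma u {oo}.
    Convention for m = oo: a > rho + oo iff a = oo. *)
Definition above (G : OAGroup) (rho : G -> Prop) (m a : option G) : Prop :=
  match m with
  | None => a = None
  | Some m =>
      match a with
      | None => True
      | Some a => ~ (exists d, rho d /\ a = gadd d m)
      end
  end.

Definition KVH1 (F : Hyperfield) (G : OAGroup) (v : F -> option G) : Prop :=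
  forall x y : F, ~ hadd x y (hzero F) ->
    exists g, (forall a, hadd x y a -> v a = g) /\ (exists a, hadd x y a /\ v a = g).

Definition KVH2 (F : Hyperfield) (G : OAGroup) (v : F -> option G) (rho : G -> Prop) : Prop :=
  forall x y z t : F, hadd x y z ->
    (hadd x y t <->
       forall s, hsub z t s -> forall m, is_emin (v x) (v y) m -> above rho m (v s)).

Definition is_krasner_valued (F : Hyperfield) (G : OAGroup) (v : F -> option G) : Prop :=
  is_valuation v /\ KVH1 v /\
  exists rho : G -> Prop,
    is_initial_segment (value_set v) rho /\ rho (gzero G) /\ KVH2 v rho.

Definition valring (F : Hyperfield) (G : OAGroup) (v : F -> option G) (x : F) : Prop :=
  ele (Some (gzero G)) (v x).
Definition maxideal (F : Hyperfield) (G : OAGroup) (v : F -> option G) (x : F) : Prop :=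
  ele (Some (gzero G)) (v x) /\ v x <> Some (gzero G).

Definition coset (F : Hyperfield) (G : OAGroup) (v : F -> option G) (x : F) : F -> Prop :=
  fun w => exists m, maxideal v m /\ hadd x m w.

(** (x + M_v) (+) (y + M_v) = { z + M_v : z \in x + y }, a set of cosets *)
Definition residue_hadd (F : Hyperfield) (G : OAGroup) (v : F -> option G) (x y : F)
  : (F -> Prop) -> Prop :=
  fun D => exists z, hadd x y z /\ D = coset v z.

Definition is_singleton (T : Type) (S : T -> Prop) : Prop :=
  exists c, forall d, S d <-> d = c.

(* Main.v *)
Require Import Defs.
From Stdlib Require Import Classical FunctionalExtensionality PropExtensionality.

Section S.
Variables (F : Hyperfield) (G : OAGroup) (v : F -> option G).
Hypothesis Hv : is_valuation v.

Lemma g0add (a : G) : gadd (gzero G) a = a.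
Proof. rewrite gaddC; apply gadd0. Qed.

Lemma vnone x : v x = None <-> x = hzero F.
Proof. destruct Hv as [_ [H _]]; apply H. Qed.

Lemma vmul x y : v (hmul x y) = eadd (v x) (v y).
Proof. destruct Hv as [_ [_ [H _]]]; apply H. Qed.

Lemma v1 : v (hone F) = Some (gzero G).
Proof.
  assert (H := vmul (hone F) (hone F)). rewrite hmul1 in H.
  destruct (v (hone F)) as [g|] eqn:E.
  - simpl in H. injection H as H.
    f_equal. rewrite <- (gaddN g).
    transitivity (gadd (gadd g g) (gopp g)); [rewrite <- gaddA, gaddN, gadd0; reflexivity|].
    rewrite <- H. reflexivity.
  - apply vnone in E. exfalso; apply (hone_neq0 E).
Qed.

Lemma sub_value u s m a : v u = Some m -> v s = Some a ->
  value_set v (gadd a (gopp m)).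
Proof.
  intros Hu Hs.
  assert (Hu0 : u <> hzero F) by (intro E; apply vnone in E; congruence).
  destruct (hinv_ex Hu0) as [y Hy].
  assert (H := vmul u y). rewrite Hy, v1, Hu in H.
  destruct (v y) as [b|] eqn:Ey; simpl in H; [|discriminate].
  injection H as H.
  assert (Hb : b = gopp m).
  { rewrite <- (gadd0 b), <- (gaddN m), gaddA, (gaddC b m), <- H. apply g0add. }
  subst b.
  exists (hmul s y). split.
  - apply hmul_neq0; intro E; apply vnone in E; congruence.
  - rewrite vmul, Hs, Ey. reflexivity.
Qed.

Lemma hneg_neg (z : F) : hneg (hneg z) = z.
Proof.
  symmetry. apply hneg_uniq. apply haddC. apply haddN.
Qed.

End S.

Theorem proposition4p16 (F : Hyperfield) (G : OAGroup) (v : F -> option G) :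
  is_krasner_valued v ->
  forall x y : F, valring v x -> valring v y ->
    is_singleton (residue_hadd v x y).
Proof.
  intros [Hv [_ [rho [[Hseg1 Hseg2] [Hr0 HK]]]]] x y Hx Hy.
  assert (Hmin : exists m, is_emin (v x) (v y) m /\ ele (Some (gzero G)) m /\
            (m = None \/ exists u, v u = m)).
  { destruct (v x) as [a|] eqn:Ea, (v y) as [b|] eqn:Eb.
    - destruct (gle_total a b) as [H|H].
      + exists (Some a). split; [left; simpl; auto|]. split; [unfold valring in Hx; rewrite Ea in Hx; exact Hx|].
        right; eauto.
      + exists (Some b). split; [right; simpl; auto|]. split; [unfold valring in Hy; rewrite Eb in Hy; exact Hy|].
        right; eauto.
    - exists (Some a). split; [left; simpl; auto|]. split; [unfold valring in Hx; rewrite Ea in Hx; exact Hx|].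
      right; eauto.
    - exists (Some b). split; [right; simpl; auto|]. split; [unfold valring in Hy; rewrite Eb in Hy; exact Hy|].
      right; eauto.
    - exists None. split; [left; simpl; auto|]. simpl; auto. }
  destruct Hmin as [m [Hm [Hm0 Hmu]]].
  assert (Key : forall z z', hadd x y z -> hadd x y z' -> forall s, hsub z z' s -> maxideal v s).
  { intros z z' Hz Hz' s Hs.
    assert (Ha := proj1 (HK x y z z' Hz) Hz' s Hs m Hm).
    unfold maxideal.
    destruct m as [m0|].
    - destruct (v s) as [a|] eqn:Es; [|simpl; split; [auto|discriminate]].
      simpl in Ha, Hm0.
      destruct Hmu as [Hmu|[u Hu]]; [discriminate|].
      assert (Hma : gle m0 a /\ a <> m0).
      { split.
        - destruct (gle_total m0 a) as [H|H]; [exact H|].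
          exfalso. destruct (classic (a = m0)) as [E|E].
          + subst. apply Ha. exists (gzero G). split; auto. symmetry; apply g0add.
          + apply Ha. exists (gadd a (gopp m0)). split.
            * apply (Hseg2 (gzero G)); auto.
              -- eapply sub_value; eauto.
              -- split.
                 ++ rewrite <- (gaddN m0). apply gle_add. exact H.
                 ++ intro E2. apply E. transitivity (gadd (gadd a (gopp m0)) m0).
                    ** rewrite <- gaddA, (gaddC (gopp m0)), gaddN, gadd0. reflexivity.
                    ** rewrite E2. apply g0add.
            * rewrite <- gaddA, (gaddC (gopp m0)), gaddN, gadd0. reflexivity.
        - intro E. subst. apply Ha. exists (gzero G). split; auto. symmetry; apply g0add. }
      destruct Hma as [H1 H2]. split.
      + simpl. eapply gle_trans; eauto.
      + intro E. injection E as E. subst a. apply H2. apply gle_anti; auto.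
    - simpl in Ha. rewrite Ha. simpl. split; [auto|discriminate]. }
  assert (Hsub : forall z z', hadd x y z -> hadd x y z' -> forall w, coset v z w -> coset v z' w).
  { intros z z' Hz Hz' w [m1 [Hm1 Hw]].
    destruct (hadd_nonempty z (hneg z')) as [s Hs].
    assert (Hsm := Key z z' Hz Hz' s Hs).
    assert (Hz2 : hadd z' s z).
    { apply haddC. apply haddC in Hs. apply hadd_rev in Hs. rewrite hneg_neg in Hs. exact Hs. }
    destruct (proj1 (haddA z' s m1 w) (ex_intro _ z (conj Hz2 Hw))) as [b [Hb1 Hb2]].
    exists b. split; [|exact Hb2].
    destruct Hv as [_ [_ [_ Hult]]].
    destruct Hsm as [Hs1 Hs2], Hm1 as [Hm1 Hm2].
    assert (Hge : ele (Some (gzero G)) (v b) /\ (v b = Some (gzero G) -> False)).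
    {
      destruct (v s) as [a|] eqn:Ea, (v m1) as [c|] eqn:Ec;
      specialize (Hult _ _ _ Hb1); rewrite Ea, Ec in Hult.
      - destruct (gle_total a c) as [H|H].
        + assert (Hl := Hult (Some a) (or_introl (conj H eq_refl))).
          destruct (v b) as [d|]; simpl in *; [|split; [auto|discriminate]].
          split; [exact (gle_trans Hs1 Hl)|]. intro E; injection E as E; subst d.
          apply Hs2. f_equal. apply gle_anti; auto.
        + assert (Hl := Hult (Some c) (or_intror (conj H eq_refl))).
          destruct (v b) as [d|]; simpl in *; [|split; [auto|discriminate]].
          split; [exact (gle_trans Hm1 Hl)|]. intro E; injection E as E; subst d.
          apply Hm2. f_equal. apply gle_anti; auto.
      - assert (Hl := Hult (Some a) (or_introl (conj I eq_refl))).
        destruct (v b) as [d|]; simpl in *; [|split; [auto|discriminate]].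
        split; [exact (gle_trans Hs1 Hl)|]. intro E; injection E as E; subst d.
        apply Hs2. f_equal. apply gle_anti; auto.
      - assert (Hl := Hult (Some c) (or_intror (conj I eq_refl))).
        destruct (v b) as [d|]; simpl in *; [|split; [auto|discriminate]].
        split; [exact (gle_trans Hm1 Hl)|]. intro E; injection E as E; subst d.
        apply Hm2. f_equal. apply gle_anti; auto.
      - assert (Hl := Hult None (or_introl (conj I eq_refl))).
        destruct (v b) as [d|]; simpl in *; [contradiction|split; [auto|discriminate]]. }
    exact Hge. }
  destruct (hadd_nonempty x y) as [z0 Hz0].
  exists (coset v z0). intro D. split.
  - intros [z [Hz ->]]. apply functional_extensionality; intro w.
    apply propositional_extensionality; split; apply Hsub; auto.
  - intros ->. exists z0; auto.
Qed.
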